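(* Let $(X,d)$ be a sequentially right $K$-complete quasi-metric space and $\varphi:X\to\mathbb{R}\cup\{\infty\}$ a proper, bounded below, nearly lower semicontinuous function. Suppose that for every $x\in X$ with $\varphi(x)>\inf\varphi(X)$ there exists $y\in X\setminus\overline{\{x\}}$ such that $\varphi(y)+d(y,x)\le\varphi(x)$. Then there exists $z\in X$ with $\varphi(z)=\inf\varphi(X)$.
   Context: A quasi-metric on $X$ is $d:X\times X\to[0,\infty)$ with $d(x,x)=0$, $d(x,z)\le d(x,y)+d(y,z)$, and $d(x,y)=d(y,x)=0\Rightarrow x=y$ (no symmetry). Topology $\tau_d$: neighbourhood base at $x$ given by $\{y:d(x,y)<r\}$, $r>0$; $x_n\to x$ iff $d(x,x_n)\to0$; $\overline{\{x\}}=\{y:d(y,x)=0\}$. A sequence $(x_n)$ is right $K$-Cauchy if for every $\varepsilon>0$ there is $n_\varepsilon$ with $d(x_{n+k},x_n)<\varepsilon$ for all $n\ge n_\varepsilon$, $k\in\mathbb{N}$; $X$ is sequentially right $K$-complete if every right $K$-Cauchy sequence converges. $\varphi$ is proper if finite somewhere; nearly lower semicontinuous if $\varphi(x)\le\liminf_n\varphi(x_n)$ for every sequence with pairwise distinct terms converging to $x$. *)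

(* Defs.v *)
From Stdlib Require Import Reals.
From Coquelicot Require Import Coquelicot.
Open Scope R_scope.

Definition quasi_metric {X : Type} (d : X -> X -> R) : Prop :=
  (forall x y, 0 <= d x y) /\
  (forall x, d x x = 0) /\
  (forall x y z, d x z <= d x y + d y z) /\
  (forall x y, d x y = 0 -> d y x = 0 -> x = y).

(* x_n -> x in tau_d  iff  d(x, x_n) -> 0 *)
Definition qconverges {X : Type} (d : X -> X -> R) (xs : nat -> X) (x : X) : Prop :=
  forall eps, 0 < eps -> exists N, forall n, (N <= n)%nat -> d x (xs n) < eps.

Definition right_K_Cauchy {X : Type} (d : X -> X -> R) (xs : nat -> X) : Prop :=
  forall eps, 0 < eps -> exists N, forall n k, (N <= n)%nat -> (1 <= k)%nat ->
    d (xs (n + k)%nat) (xs n) < eps.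

Definition seq_right_K_complete {X : Type} (d : X -> X -> R) : Prop :=
  forall xs : nat -> X, right_K_Cauchy d xs -> exists x, qconverges d xs x.

(* closure of a singleton in tau_d *)
Definition closure_singleton {X : Type} (d : X -> X -> R) (x : X) : X -> Prop :=
  fun y => d y x = 0.

Definition ext_valued {X : Type} (phi : X -> Rbar) : Prop :=
  forall x, phi x <> m_infty.

Definition proper_fun {X : Type} (phi : X -> Rbar) : Prop :=
  exists x, is_finite (phi x).

Definition bounded_below {X : Type} (phi : X -> Rbar) : Prop :=
  exists m : R, forall x, Rbar_le m (phi x).

(* phi(x) <= liminf phi(x_n), written out: every real c < phi(x) is
   eventually below phi(x_n). *)
Definition le_liminf {X : Type} (phi : X -> Rbar) (xs : nat -> X) (x : X) : Prop :=
  forall c : R, Rbar_lt c (phi x) ->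
    exists N, forall n, (N <= n)%nat -> Rbar_lt c (phi (xs n)).

Definition nearly_lsc {X : Type} (d : X -> X -> R) (phi : X -> Rbar) : Prop :=
  forall (xs : nat -> X) (x : X),
    (forall n m, n <> m -> xs n <> xs m) ->
    qconverges d xs x -> le_liminf phi xs x.

Definition inf_val {X : Type} (phi : X -> Rbar) : Rbar :=
  Rbar_glb (fun r => exists x, phi x = r).

(* Main.v *)
Require Import Defs.
From Stdlib Require Import Reals Lra Lia Classical ClassicalEpsilon.
From Coquelicot Require Import Coquelicot.
Open Scope R_scope.

Lemma glb_le {X : Type} (phi : X -> Rbar) x : Rbar_le (inf_val phi) (phi x).
Proof.
  unfold inf_val.
  rewrite <- (Rbar_is_glb_unique (fun r => r = phi x) (phi x)).
  - apply Rbar_glb_subset. intros r ->. eauto.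
  - split.
    + intros r ->. apply Rbar_le_refl.
    + intros b Hb. apply Hb. reflexivity.
Qed.

Lemma near_inf {X : Type} (S : X -> Prop) (f : X -> R) (m eps : R) :
  0 < eps -> (exists x, S x) -> (forall x, S x -> m <= f x) ->
  exists x, S x /\ forall y, S y -> f x <= f y + eps.
Proof.
  intros He [x0 Hx0] Hm.
  set (E := fun r => exists y, S y /\ r = - f y).
  destruct (completeness E) as [l [Hub Hl]].
  - exists (- m). intros r [y [Hy ->]]. specialize (Hm y Hy). lra.
  - exists (- f x0). exists x0. auto.
  - destruct (classic (exists y, S y /\ - f y > l - eps)) as [[y [Hy Hy2]]|Hn].
    + exists y. split; auto. intros z Hz.
      assert (- f z <= l) by (apply Hub; exists z; auto). lra.
    + exfalso. assert (l <= l - eps); [|lra].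
      apply Hl. intros r [y [Hy ->]].
      apply Rnot_lt_le. intro. apply Hn. exists y. split; auto.
Qed.

Lemma dec_le (a : nat -> R) : (forall n, a (S n) < a n) ->
  forall n k, a (n + k)%nat <= a n.
Proof.
  intros Ha n k. induction k.
  - rewrite Nat.add_0_r. lra.
  - rewrite Nat.add_succ_r. specialize (Ha (n + k)%nat). lra.
Qed.

Lemma dec_lt (a : nat -> R) : (forall n, a (S n) < a n) ->
  forall n m, (n < m)%nat -> a m < a n.
Proof.
  intros Ha n m Hnm. induction Hnm.
  - apply Ha.
  - specialize (Ha m). lra.
Qed.

Theorem corollary3p6 (X : Type) (d : X -> X -> R) (phi : X -> Rbar) :
  quasi_metric d ->
  seq_right_K_complete d ->
  ext_valued phi ->
  proper_fun phi ->
  bounded_below phi ->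
  nearly_lsc d phi ->
  (forall x, Rbar_lt (inf_val phi) (phi x) ->
     exists y, ~ closure_singleton d x y /\
       Rbar_le (Rbar_plus (phi y) (d y x)) (phi x)) ->
  exists z, phi z = inf_val phi.
Proof.
  intros [Hd0 [Hdxx [Htri Hsep]]] Hcomp Hext [x0 Hx0] [m Hm] Hlsc H.
  apply NNPP. intro Hno.
  assert (H' : forall x, exists y, ~ closure_singleton d x y /\
       Rbar_le (Rbar_plus (phi y) (d y x)) (phi x)).
  { intro x. apply H. destruct (Rbar_le_lt_or_eq_dec _ _ (glb_le phi x)) as [h|h]; auto.
    exfalso. apply Hno. exists x. auto. }
  clear H.
  set (f := fun x => real (phi x)).
  set (T := fun x y => is_finite (phi y) /\ f y + d y x <= f x /\ f y < f x).
  assert (HT : forall x, is_finite (phi x) -> exists y, T x y).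
  { intros x Hx. destruct (H' x) as [y [Hy1 Hy2]].
    unfold closure_singleton in Hy1.
    assert (0 < d y x) by (specialize (Hd0 y x); destruct Hd0; auto; congruence).
    unfold is_finite in Hx. rewrite <- Hx in Hy2.
    specialize (Hext y).
    destruct (phi y) as [q| |] eqn:Ey; simpl in Hy2; try contradiction; try congruence.
    exists y. unfold T, f. rewrite Ey. simpl. unfold is_finite. repeat split; auto; lra. }
  set (eps := fun n : nat => / INR (S n)).
  assert (Heps : forall n, 0 < eps n).
  { intro n. unfold eps. apply Rinv_0_lt_compat. apply lt_0_INR. lia. }
  assert (Hstep : forall n x, exists x', is_finite (phi x) ->
     T x x' /\ forall y, T x y -> f x' <= f y + eps n).
  { intros n x. destruct (classic (is_finite (phi x))) as [Hx|Hx].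
    - destruct (near_inf (T x) f m (eps n) (Heps n) (HT x Hx)) as [x' Hx'].
      + intros y [Hy _]. specialize (Hm y). unfold f. unfold is_finite in Hy.
        rewrite <- Hy in Hm. exact Hm.
      + exists x'. auto.
    - exists x. intro; contradiction. }
  assert (Hst : forall p : nat * X, exists x', is_finite (phi (snd p)) ->
     T (snd p) x' /\ forall y, T (snd p) y -> f x' <= f y + eps (fst p)).
  { intros [n x]. apply Hstep. }
  destruct (choice _ Hst) as [step Hstep'].
  clear Hst Hstep.
  set (xs := fix xs (n : nat) : X := match n with O => x0 | S k => step (k, xs k) end).
  assert (Hxs : forall n, xs (S n) = step (n, xs n)) by reflexivity.
  assert (Hfin : forall n, is_finite (phi (xs n))).
  { induction n. exact Hx0. rewrite Hxs. apply (Hstep' (n, xs n) IHn). }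
  assert (HTn : forall n, T (xs n) (xs (S n)) /\
      forall y, T (xs n) y -> f (xs (S n)) <= f y + eps n).
  { intro n. rewrite Hxs. apply (Hstep' (n, xs n) (Hfin n)). }
  set (a := fun n => f (xs n)).
  assert (Hdec : forall n, a (S n) < a n).
  { intro n. destruct (HTn n) as [[_ [_ h]] _]. exact h. }
  assert (Hdist : forall n k, d (xs (n + k)%nat) (xs n) <= a n - a (n + k)%nat).
  { intros n k. induction k.
    - rewrite Nat.add_0_r, Hdxx. lra.
    - rewrite Nat.add_succ_r.
      destruct (HTn (n + k)%nat) as [[_ [h _]] _].
      specialize (Htri (xs (S (n + k))) (xs (n + k)%nat) (xs n)).
      unfold a in *. lra. }
  assert (Ham : forall n, m <= a n).
  { intro n. specialize (Hm (xs n)). specialize (Hfin n). unfold is_finite in Hfin.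
    unfold a, f. rewrite <- Hfin in Hm. exact Hm. }
  set (E := fun r => exists n, r = - a n).
  destruct (completeness E) as [l [Hub Hl]].
  { exists (- m). intros r [n ->]. specialize (Ham n). lra. }
  { exists (- a O). exists O. auto. }
  set (L := - l).
  assert (HL : forall n, L <= a n).
  { intro n. assert (- a n <= l) by (apply Hub; exists n; auto). unfold L. lra. }
  assert (HL2 : forall e, 0 < e -> exists N, forall n, (N <= n)%nat -> a n < L + e).
  { intros e He. destruct (classic (exists N, a N < L + e)) as [[N HN]|Hn].
    - exists N. intros n Hn. replace n with (N + (n - N))%nat by lia.
      pose proof (dec_le a Hdec N (n - N)). lra.
    - exfalso. assert (l <= l - e); [|lra]. apply Hl. intros r [n ->].
      assert (~ a n < L + e) by (intro; apply Hn; eauto). unfold L in *. lra. }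
  assert (Hcau : right_K_Cauchy d xs).
  { intros e He. destruct (HL2 e He) as [N HN]. exists N. intros n k Hn Hk.
    specialize (Hdist n k). specialize (HL (n + k)%nat). specialize (HN n Hn). lra. }
  destruct (Hcomp xs Hcau) as [xst Hconv].
  assert (Hdistinct : forall n k, n <> k -> xs n <> xs k).
  { intros n k Hnk Heq.
    assert (a n = a k) by (unfold a; rewrite Heq; auto).
    destruct (Nat.lt_gt_cases n k) as [[h|h] _]; auto.
    - pose proof (dec_lt a Hdec n k h). lra.
    - pose proof (dec_lt a Hdec k n h). lra. }
  pose proof (Hlsc xs xst Hdistinct Hconv) as Hli.
  assert (Hpx : exists p, phi xst = Finite p /\ p <= L).
  { assert (Hgen : forall c, L < c -> Rbar_lt c (phi xst) -> False).
    { intros c Hc Hcx. destruct (Hli c Hcx) as [N1 HN1].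
      destruct (HL2 (c - L)) as [N2 HN2]; [lra|].
      specialize (HN1 (N1 + N2)%nat ltac:(lia)). specialize (HN2 (N1 + N2)%nat ltac:(lia)).
      specialize (Hfin (N1 + N2)%nat). unfold is_finite in Hfin. unfold a, f in HN2.
      rewrite <- Hfin in HN1. simpl in HN1. lra. }
    specialize (Hext xst).
    destruct (phi xst) as [p| |]; try congruence.
    - exists p. split; auto. apply Rnot_lt_le. intro h.
      apply (Hgen ((L + p) / 2)); simpl; lra.
    - exfalso. apply (Hgen (L + 1)); simpl; auto; lra. }
  destruct Hpx as [p [Hp HpL]].
  assert (Hdx : forall n, d xst (xs n) <= a n - L).
  { intro n. apply Rle_plus_epsilon. intros e He.
    destruct (Hconv e He) as [K HK]. specialize (HK (n + K)%nat ltac:(lia)).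
    specialize (Htri xst (xs (n + K)%nat) (xs n)). specialize (Hdist n K).
    specialize (HL (n + K)%nat). lra. }
  destruct (H' xst) as [y [Hy1 Hy2]].
  unfold closure_singleton in Hy1.
  assert (Hdy : 0 < d y xst) by (specialize (Hd0 y xst); destruct Hd0; auto; congruence).
  rewrite Hp in Hy2. specialize (Hext y).
  destruct (phi y) as [q| |] eqn:Ey; simpl in Hy2; try contradiction; try congruence.
  assert (HTy : forall n, T (xs n) y).
  { intro n. unfold T, f. rewrite Ey. simpl. split; [reflexivity|].
    specialize (Htri y xst (xs n)). specialize (Hdx n). specialize (HL (S n)).
    specialize (Hdec n). unfold a, f in *. lra. }
  destruct (archimed_cor1 (L - q)) as [N [HN HN0]]; [lra|].
  destruct N as [|n]; [lia|].
  destruct (HTn n) as [_ h]. specialize (h y (HTy n)).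
  unfold f at 2 in h. rewrite Ey in h. simpl in h.
  specialize (HL (S n)). unfold a, eps in *. cbv beta in *. rewrite Hxs in HL. lra.
Qed.
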